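(* Let $X$ be a real Banach space and $T:X\rightrightarrows X^*$ a monotone operator whose range $R_T$ is bounded. Consider the conditions: (i) for every $x^*\notin\overline{R_T}$, $\sup\left\{\frac{\langle x^*-z^*,z\rangle}{\|x^*-z^*\|}:(z,z^* )\in G(T)\right\}=\infty$; (ii) $\pi_2\,\mathrm{dom}\,\varphi_T\subset\overline{R_T}$; (iii) $\overline{R_T}=\overline{\mathrm{co}\,R_T}=\overline{\pi_2\,\mathrm{dom}\,\varphi_T}$; (iv) $\overline{R_T}$ is convex; (i$'$) for every $x^*\notin\overline{R_T}^{w^*}$, $\sup\left\{\frac{\langle x^*-z^*,z\rangle}{\|x^*-z^*\|}:(z,z^* )\in G(T)\right\}=\infty$; (ii$'$) $\pi_2\,\mathrm{dom}\,\varphi_T\subset\overline{R_T}^{w^*}$; (iii$'$) $\overline{R_T}^{w^*}=\overline{\mathrm{co}\,R_T}^{w^*}=\overline{\pi_2\,\mathrm{dom}\,\varphi_T}^{w^*}$; (iv$'$) $\overline{R_T}^{w^*}$ is convex. Then (i), (ii), (iii) are equivalent; (iii) $\Rightarrow$ (iv) $\Rightarrow$ (iv$'$); (i) $\Rightarrow$ (i$'$); (ii) $\Rightarrow$ (ii$'$) $\Rightarrow$ (iii$'$) $\Rightarrow$ (i$'$); and (iii$'$) $\Rightarrow$ (iv$'$). If moreover $T$ is maximal monotone, then (iv$'$) $\Rightarrow$ (i$'$).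
   Context: $X$ is a real Banach space with topological dual $X^*$ and pairing $\langle x,x^*\rangle$. A (multivalued) operator $T:X\rightrightarrows X^*$ has graph $G(T)=\{(x,x^* ):x^*\in T(x)\}$, domain $D_T=\{x:T(x)\neq\emptyset\}$ and range $R_T=\bigcup_{x}T(x)$. $T$ is monotone if $\langle x^*-y^*,x-y\rangle\ge0$ for all $(x,x^* ),(y,y^* )\in G(T)$; it is maximal monotone if no monotone operator has a graph strictly containing $G(T)$. The Fitzpatrick function of a monotone $T$ is $\varphi_T(x,x^* )=\sup\{\langle x^*-z^*,z-x\rangle:(z,z^* )\in G(T)\}+\langle x^*,x\rangle$, $\mathrm{dom}\,\varphi_T=\{(x,x^* ):\varphi_T(x,x^* )<\infty\}$, and $\pi_2:X\times X^*\to X^*$ is the projection. $\mathrm{co}$ denotes convex hull, bars denote norm closure, and $\overline{A}^{w^*}$ denotes weak$^*$ closure in $X^*$. *)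

(* Defs.v *)
From Stdlib Require Import Reals Lra List ClassicalEpsilon.
Open Scope R_scope.

Record Banach := {
  carrier :> Type;
  vzero : carrier;
  vadd : carrier -> carrier -> carrier;
  vopp : carrier -> carrier;
  vscal : R -> carrier -> carrier;
  vnorm : carrier -> R;
  vadd_assoc : forall x y z, vadd x (vadd y z) = vadd (vadd x y) z;
  vadd_comm : forall x y, vadd x y = vadd y x;
  vadd_0 : forall x, vadd x vzero = x;
  vadd_opp : forall x, vadd x (vopp x) = vzero;
  vscal_1 : forall x, vscal 1 x = x;
  vscal_assoc : forall a b x, vscal a (vscal b x) = vscal (a * b) x;
  vscal_distr_v : forall a x y, vscal a (vadd x y) = vadd (vscal a x) (vscal a y);
  vscal_distr_s : forall a b x, vscal (a + b) x = vadd (vscal a x) (vscal b x);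
  vnorm_nonneg : forall x, 0 <= vnorm x;
  vnorm_eq0 : forall x, vnorm x = 0 -> x = vzero;
  vnorm_scal : forall a x, vnorm (vscal a x) = Rabs a * vnorm x;
  vnorm_triangle : forall x y, vnorm (vadd x y) <= vnorm x + vnorm y;
  complete : forall u : nat -> carrier,
    (forall eps, eps > 0 -> exists N, forall m n, (m >= N)%nat -> (n >= N)%nat ->
        vnorm (vadd (u m) (vopp (u n))) < eps) ->
    exists l, forall eps, eps > 0 -> exists N, forall n, (n >= N)%nat ->
        vnorm (vadd (u n) (vopp l)) < eps
}.

Definition vsub (X : Banach) (x y : X) : X := vadd X x (vopp X y).

(** Elements of the topological dual X^* are represented as functions X -> R
    satisfying [is_dual]; the pairing <x, x^*> is application [f x]. *)
Definition is_dual (X : Banach) (f : X -> R) : Prop :=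
  (forall x y, f (vadd X x y) = f x + f y) /\
  (forall a x, f (vscal X a x) = a * f x) /\
  (exists C, forall x, Rabs (f x) <= C * vnorm X x).

Definition dsub (X : Banach) (f g : X -> R) : X -> R := fun x => f x - g x.

Definition dnorm (X : Banach) (f : X -> R) : R :=
  epsilon (inhabits 0)
    (fun r => is_lub (fun y => exists x : X, vnorm X x <= 1 /\ y = Rabs (f x)) r).

(** A (multivalued) operator T : X =>> X^*, given by its graph. *)
Definition operator (X : Banach) (T : X -> (X -> R) -> Prop) : Prop :=
  forall x f, T x f -> is_dual X f.

Definition monotone (X : Banach) (T : X -> (X -> R) -> Prop) : Prop :=
  forall x f y g, T x f -> T y g -> 0 <= f (vsub X x y) - g (vsub X x y).

Definition maximal_monotone (X : Banach) (T : X -> (X -> R) -> Prop) : Prop :=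
  monotone X T /\
  forall S : X -> (X -> R) -> Prop, operator X S -> monotone X S ->
    (forall x f, T x f -> S x f) -> forall x f, S x f -> T x f.

Definition range (X : Banach) (T : X -> (X -> R) -> Prop) : (X -> R) -> Prop :=
  fun f => exists x, T x f.

Definition bounded_set (X : Banach) (A : (X -> R) -> Prop) : Prop :=
  exists C, forall f, A f -> dnorm X f <= C.

(** Fitzpatrick function domain: phi_T(x, xs) < +oo. *)
Definition dom_fitz (X : Banach) (T : X -> (X -> R) -> Prop) (x : X) (f : X -> R) : Prop :=
  is_dual X f /\
  exists M, forall z g, T z g -> (f (vsub X z x) - g (vsub X z x)) + f x <= M.

Definition pi2_dom_fitz (X : Banach) (T : X -> (X -> R) -> Prop) : (X -> R) -> Prop :=
  fun f => exists x, dom_fitz X T x f.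

Definition ncl (X : Banach) (A : (X -> R) -> Prop) : (X -> R) -> Prop :=
  fun f => is_dual X f /\
    forall eps, eps > 0 -> exists g, A g /\ dnorm X (dsub X f g) < eps.

(** Weak* closure in X^* (basic weak* neighbourhoods: finitely many points). *)
Definition wcl (X : Banach) (A : (X -> R) -> Prop) : (X -> R) -> Prop :=
  fun f => is_dual X f /\
    forall (l : list X) eps, eps > 0 ->
      exists g, A g /\ Forall (fun x => Rabs (f x - g x) < eps) l.

Fixpoint rsum (n : nat) (u : nat -> R) : R :=
  match n with O => 0 | S k => rsum k u + u k end.

Definition co (X : Banach) (A : (X -> R) -> Prop) : (X -> R) -> Prop :=
  fun f => exists (n : nat) (lam : nat -> R) (a : nat -> (X -> R)),
    (forall i, (i < n)%nat -> 0 <= lam i /\ A (a i)) /\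
    rsum n lam = 1 /\
    forall x, f x = rsum n (fun i => lam i * a i x).

Definition convex (X : Banach) (C : (X -> R) -> Prop) : Prop :=
  forall f g t, C f -> C g -> 0 <= t <= 1 -> C (fun x => t * f x + (1 - t) * g x).

Definition set_eq (X : Banach) (A B : (X -> R) -> Prop) : Prop :=
  forall f, A f <-> B f.

Definition subset (X : Banach) (A B : (X -> R) -> Prop) : Prop :=
  forall f, A f -> B f.

Definition sup_ratio_infinite (X : Banach) (T : X -> (X -> R) -> Prop) (f : X -> R) : Prop :=
  forall M, exists z g, T z g /\ (f z - g z) / dnorm X (dsub X f g) > M.

Definition cond_i X T := forall f, is_dual X f -> ~ ncl X (range X T) f ->
  sup_ratio_infinite X T f.
Definition cond_ii X T := subset X (pi2_dom_fitz X T) (ncl X (range X T)).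
Definition cond_iii X T :=
  set_eq X (ncl X (range X T)) (ncl X (co X (range X T))) /\
  set_eq X (ncl X (co X (range X T))) (ncl X (pi2_dom_fitz X T)).
Definition cond_iv X T := convex X (ncl X (range X T)).
Definition cond_i' X T := forall f, is_dual X f -> ~ wcl X (range X T) f ->
  sup_ratio_infinite X T f.
Definition cond_ii' X T := subset X (pi2_dom_fitz X T) (wcl X (range X T)).
Definition cond_iii' X T :=
  set_eq X (wcl X (range X T)) (wcl X (co X (range X T))) /\
  set_eq X (wcl X (co X (range X T))) (wcl X (pi2_dom_fitz X T)).
Definition cond_iv' X T := convex X (wcl X (range X T)).

(* Main.v *)
Require Import Defs.
From Stdlib Require Import Reals Lra Lia List ClassicalEpsilon Classical Arith.
Open Scope R_scope.

Lemma vadd_idem (X : Banach) (a : X) : vadd X a a = a -> a = vzero X.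
Proof.
  intro H. assert (E : vadd X (vadd X a a) (vopp X a) = vadd X a (vopp X a)) by (rewrite H; reflexivity).
  rewrite <- vadd_assoc, vadd_opp, vadd_0 in E. exact E.
Qed.

Lemma vscal_0 (X : Banach) (x : X) : vscal X 0 x = vzero X.
Proof.
  apply vadd_idem. rewrite <- vscal_distr_s. f_equal; ring.
Qed.

Lemma vnorm_0 (X : Banach) : vnorm X (vzero X) = 0.
Proof.
  rewrite <- (vscal_0 X (vzero X)), vnorm_scal, Rabs_R0; ring.
Qed.

Lemma dual_add (X : Banach) f x y : is_dual X f -> f (vadd X x y) = f x + f y.
Proof. intros [H _]. apply H. Qed.
Lemma dual_scal (X : Banach) f a x : is_dual X f -> f (vscal X a x) = a * f x.
Proof. intros [_ [H _]]. apply H. Qed.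
Lemma dual_0 (X : Banach) f : is_dual X f -> f (vzero X) = 0.
Proof.
  intro H. rewrite <- (vscal_0 X (vzero X)), (dual_scal X f 0 _ H). ring.
Qed.
Lemma dual_opp (X : Banach) f x : is_dual X f -> f (vopp X x) = - f x.
Proof.
  intro H. assert (E := dual_add X f x (vopp X x) H).
  rewrite vadd_opp, dual_0 in E by exact H. lra.
Qed.
Lemma dual_sub (X : Banach) f x y : is_dual X f -> f (vsub X x y) = f x - f y.
Proof.
  intro H. unfold vsub. rewrite dual_add, dual_opp by exact H. ring.
Qed.

Lemma dual_lin (X : Banach) f g a b : is_dual X f -> is_dual X g ->
  is_dual X (fun x => a * f x + b * g x).
Proof.
  intros Hf Hg. split; [|split].
  - intros x y. rewrite !dual_add by assumption. ring.
  - intros c x. rewrite !dual_scal by assumption. ring.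
  - destruct Hf as [_ [_ [C1 H1]]]. destruct Hg as [_ [_ [C2 H2]]].
    exists (Rabs a * C1 + Rabs b * C2). intro x.
    eapply Rle_trans. apply Rabs_triang. rewrite !Rabs_mult.
    specialize (H1 x). specialize (H2 x).
    assert (0 <= Rabs a) by apply Rabs_pos. assert (0 <= Rabs b) by apply Rabs_pos.
    nra.
Qed.

Lemma dual_dsub (X : Banach) f g : is_dual X f -> is_dual X g -> is_dual X (dsub X f g).
Proof.
  intros Hf Hg. assert (H := dual_lin X f g 1 (-1) Hf Hg).
  destruct H as [A [B [C D]]]. unfold dsub. split; [|split].
  - intros x y. specialize (A x y). lra.
  - intros c x. specialize (B c x). lra.
  - exists C. intro x. specialize (D x). replace (f x - g x) with (1 * f x + -1 * g x) by ring. auto.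
Qed.

Definition dset (X : Banach) (f : X -> R) := fun y => exists x : X, vnorm X x <= 1 /\ y = Rabs (f x).

Lemma dnorm_lub (X : Banach) f : is_dual X f -> is_lub (dset X f) (dnorm X f).
Proof.
  intro Hf. unfold dnorm. apply epsilon_spec.
  destruct Hf as [_ [_ [C HC]]].
  destruct (completeness (dset X f)) as [m Hm].
  - exists (Rabs C). intros y [x [Hx ->]]. specialize (HC x).
    assert (C <= Rabs C) by apply RRle_abs. assert (0 <= vnorm X x) by apply vnorm_nonneg.
    assert (0 <= Rabs C) by apply Rabs_pos.
    assert (C * vnorm X x <= Rabs C). { destruct (Rle_dec 0 C); nra. } lra.
  - exists (Rabs (f (vzero X))). exists (vzero X). rewrite vnorm_0. split; [lra|reflexivity].
  - exists m. exact Hm.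
Qed.

Lemma dnorm_nonneg (X : Banach) f : is_dual X f -> 0 <= dnorm X f.
Proof.
  intro Hf. destruct (dnorm_lub X f Hf) as [H1 _]. apply Rle_trans with (Rabs (f (vzero X))).
  apply Rabs_pos. apply H1. exists (vzero X). rewrite vnorm_0. split; [lra|reflexivity].
Qed.

Lemma dnorm_bound (X : Banach) f x : is_dual X f -> Rabs (f x) <= dnorm X f * vnorm X x.
Proof.
  intro Hf. destruct (dnorm_lub X f Hf) as [H1 _].
  assert (Hn := vnorm_nonneg X x).
  destruct (Req_dec (vnorm X x) 0) as [E|E].
  - apply vnorm_eq0 in E. subst x. rewrite dual_0, Rabs_R0, vnorm_0 by exact Hf. lra.
  - assert (Hp : 0 < vnorm X x) by lra.
    assert (Hy : Rabs (f (vscal X (/ vnorm X x) x)) <= dnorm X f).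
    { apply H1. eexists. split; [|reflexivity]. rewrite vnorm_scal, Rabs_right.
      rewrite Rinv_l; lra. apply Rle_ge, Rlt_le, Rinv_0_lt_compat; lra. }
    rewrite dual_scal, Rabs_mult, Rabs_right in Hy by (try exact Hf; apply Rle_ge, Rlt_le, Rinv_0_lt_compat; lra).
    apply Rmult_le_compat_l with (r := vnorm X x) in Hy; [|lra].
    rewrite <- Rmult_assoc, Rinv_r, Rmult_1_l in Hy by lra. lra.
Qed.

Lemma dnorm_le (X : Banach) f K : is_dual X f -> 0 <= K ->
  (forall x, Rabs (f x) <= K * vnorm X x) -> dnorm X f <= K.
Proof.
  intros Hf HK H. destruct (dnorm_lub X f Hf) as [_ H2]. apply H2.
  intros y [x [Hx ->]]. specialize (H x). nra.
Qed.

Lemma dnorm_zero (X : Banach) f x : is_dual X f -> dnorm X f <= 0 -> f x = 0.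
Proof.
  intros Hf H. assert (B := dnorm_bound X f x Hf). assert (N := dnorm_nonneg X f Hf).
  assert (dnorm X f = 0) by lra. rewrite H0 in B. rewrite Rmult_0_l in B.
  assert (Rabs (f x) = 0) by (assert (Z := Rabs_pos (f x)); lra).
  destruct (Req_dec (f x) 0); auto. apply Rabs_no_R0 in H2. contradiction.
Qed.

Definition duals (X : Banach) (A : (X -> R) -> Prop) := forall g, A g -> is_dual X g.

Lemma dnorm_triang (X : Banach) f g h : is_dual X f -> is_dual X g -> is_dual X h ->
  dnorm X (dsub X f h) <= dnorm X (dsub X f g) + dnorm X (dsub X g h).
Proof.
  intros Hf Hg Hh. assert (D1 := dual_dsub X f g Hf Hg). assert (D2 := dual_dsub X g h Hg Hh).
  apply dnorm_le. apply dual_dsub; auto.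
  pose proof (dnorm_nonneg X _ D1). pose proof (dnorm_nonneg X _ D2). lra.
  intro x. assert (B1 := dnorm_bound X _ x D1). assert (B2 := dnorm_bound X _ x D2).
  unfold dsub in *. replace (f x - h x) with ((f x - g x) + (g x - h x)) by ring.
  eapply Rle_trans. apply Rabs_triang. lra.
Qed.

Fixpoint nsum (X : Banach) (l : list X) : R :=
  match l with nil => 0 | x :: l' => vnorm X x + nsum X l' end.

Lemma nsum_ge (X : Banach) l x : In x l -> vnorm X x <= nsum X l /\ 0 <= nsum X l.
Proof.
  induction l as [|y l IH]; simpl. tauto.
  assert (0 <= nsum X l).
  { clear IH. induction l; simpl. lra. pose proof (vnorm_nonneg X a). lra. }
  pose proof (vnorm_nonneg X y). pose proof (vnorm_nonneg X x).
  intros [->|H']. lra. destruct (IH H'). lra.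
Qed.

Lemma nsum_nonneg (X : Banach) l : 0 <= nsum X l.
Proof. induction l; simpl. lra. pose proof (vnorm_nonneg X a). lra. Qed.

Lemma ncl_wcl (X : Banach) A f : duals X A -> ncl X A f -> wcl X A f.
Proof.
  intros HA [Hf H]. split; auto. intros l eps Heps.
  assert (S0 := nsum_nonneg X l).
  destruct (H (eps / (1 + nsum X l))) as [g [Ag Hg]].
  { apply Rdiv_lt_0_compat; lra. }
  exists g. split; auto. apply Forall_forall. intros x Hx.
  assert (D := dual_dsub X f g Hf (HA g Ag)).
  assert (B := dnorm_bound X _ x D). unfold dsub in B.
  destruct (nsum_ge X l x Hx) as [N1 N2].
  pose proof (dnorm_nonneg X _ D). pose proof (vnorm_nonneg X x).
  apply Rle_lt_trans with (dnorm X (dsub X f g) * vnorm X x); auto.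
  apply Rle_lt_trans with (eps / (1 + nsum X l) * nsum X l).
  - apply Rle_trans with (dnorm X (dsub X f g) * nsum X l). nra. nra.
  - unfold Rdiv. rewrite Rmult_assoc. 
    assert (nsum X l * / (1 + nsum X l) < 1).
    { apply Rmult_lt_reg_r with (1 + nsum X l). lra.
      rewrite Rmult_assoc, Rinv_l by lra. lra. }
    rewrite (Rmult_comm (/ _)). nra.
Qed.

Lemma self_ncl (X : Banach) (A : (X -> R) -> Prop) f : is_dual X f -> A f -> ncl X A f.
Proof.
  intros Hf Af. split; auto. intros eps He. exists f. split; auto.
  apply Rle_lt_trans with 0; auto. apply dnorm_le. apply dual_dsub; auto. lra.
  intro x. unfold dsub. rewrite Rminus_diag, Rabs_R0. pose proof (vnorm_nonneg X x). lra.
Qed.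

Lemma self_wcl (X : Banach) (A : (X -> R) -> Prop) f : is_dual X f -> A f -> wcl X A f.
Proof.
  intros Hf Af. split; auto. intros l eps He. exists f. split; auto.
  apply Forall_forall. intros. rewrite Rminus_diag, Rabs_R0. lra.
Qed.

Lemma ncl_mono (X : Banach) (A B : (X -> R) -> Prop) f :
  (forall g, A g -> B g) -> ncl X A f -> ncl X B f.
Proof.
  intros H [Hf H2]. split; auto. intros eps He. destruct (H2 eps He) as [g [Ag Hg]]. eauto.
Qed.

Lemma wcl_mono (X : Banach) (A B : (X -> R) -> Prop) f :
  (forall g, A g -> B g) -> wcl X A f -> wcl X B f.
Proof.
  intros H [Hf H2]. split; auto. intros l eps He. destruct (H2 l eps He) as [g [Ag Hg]]. eauto.
Qed.

Lemma ncl_idem (X : Banach) A f : duals X A -> ncl X (ncl X A) f -> ncl X A f.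
Proof.
  intros HA [Hf H]. split; auto. intros eps He.
  destruct (H (eps/2)) as [g [[Hg Hg2] Dg]]. lra.
  destruct (Hg2 (eps/2)) as [h [Ah Dh]]. lra.
  exists h. split; auto.
  pose proof (dnorm_triang X f g h Hf Hg (HA h Ah)). lra.
Qed.

Lemma wcl_idem (X : Banach) A f : wcl X (wcl X A) f -> wcl X A f.
Proof.
  intros [Hf H]. split; auto. intros l eps He.
  destruct (H l (eps/2)) as [g [[Hg Hg2] Dg]]. lra.
  destruct (Hg2 l (eps/2)) as [h [Ah Dh]]. lra.
  exists h. split; auto. rewrite Forall_forall in *. intros x Hx.
  specialize (Dg x Hx). specialize (Dh x Hx).
  replace (f x - h x) with ((f x - g x) + (g x - h x)) by ring.
  eapply Rle_lt_trans. apply Rabs_triang. lra.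
Qed.

Lemma ncl_duals (X : Banach) A : duals X (ncl X A).
Proof. intros g [H _]; exact H. Qed.
Lemma wcl_duals (X : Banach) A : duals X (wcl X A).
Proof. intros g [H _]; exact H. Qed.

Lemma rsum_ext n u v : (forall i, (i < n)%nat -> u i = v i) -> rsum n u = rsum n v.
Proof. induction n; simpl; intros H; auto. rewrite IHn, H; auto; intros; apply H; lia. Qed.
Lemma rsum_le n u v : (forall i, (i < n)%nat -> u i <= v i) -> rsum n u <= rsum n v.
Proof. induction n; simpl; intros H. lra. assert (H1 := H n (Nat.lt_succ_diag_r n)).
  assert (rsum n u <= rsum n v) by (apply IHn; intros; apply H; lia). lra. Qed.
Lemma rsum_abs n u v : (forall i, (i < n)%nat -> Rabs (u i) <= v i) -> Rabs (rsum n u) <= rsum n v.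
Proof. induction n; simpl; intros H. rewrite Rabs_R0; lra.
  assert (H1 := H n (Nat.lt_succ_diag_r n)).
  assert (Rabs (rsum n u) <= rsum n v) by (apply IHn; intros; apply H; lia).
  eapply Rle_trans. apply Rabs_triang. lra. Qed.
Lemma rsum_add n u v : rsum n (fun i => u i + v i) = rsum n u + rsum n v.
Proof. induction n; simpl. ring. rewrite IHn; ring. Qed.
Lemma rsum_scal n c u : rsum n (fun i => c * u i) = c * rsum n u.
Proof. induction n; simpl. ring. rewrite IHn; ring. Qed.
Lemma rsum_app n1 n2 u : rsum (n1 + n2) u = rsum n1 u + rsum n2 (fun i => u (n1 + i)%nat).
Proof. induction n2; simpl. rewrite Nat.add_0_r; ring. rewrite Nat.add_succ_r. simpl. rewrite IHn2; ring. Qed.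

Lemma range_co (X : Banach) (A : (X -> R) -> Prop) g : A g -> co X A g.
Proof.
  intro H. exists 1%nat, (fun _ => 1), (fun _ => g). split; [|split].
  - intros i _. split; [lra|auto].
  - simpl; ring.
  - intro x; simpl; ring.
Qed.

Lemma co_dual (X : Banach) (A : (X -> R) -> Prop) C :
  (forall g, A g -> is_dual X g /\ dnorm X g <= C) -> duals X (co X A).
Proof.
  intros HA f [n [lam [a [H1 [H2 H3]]]]]. split; [|split].
  - intros x y. rewrite !H3, <- rsum_add. apply rsum_ext. intros i Hi.
    destruct (H1 i Hi) as [_ Ai]. destruct (HA _ Ai) as [D _]. rewrite dual_add by exact D. ring.
  - intros c x. rewrite !H3, <- rsum_scal. apply rsum_ext. intros i Hi.
    destruct (H1 i Hi) as [_ Ai]. destruct (HA _ Ai) as [D _]. rewrite dual_scal by exact D. ring.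
  - exists C. intro x. rewrite H3.
    apply Rle_trans with (rsum n (fun i => lam i * (C * vnorm X x))).
    + apply rsum_abs. intros i Hi. destruct (H1 i Hi) as [L Ai]. destruct (HA _ Ai) as [D B].
      rewrite Rabs_mult, Rabs_right by lra. apply Rmult_le_compat_l; auto.
      eapply Rle_trans. apply dnorm_bound; auto. apply Rmult_le_compat_r; auto. apply vnorm_nonneg.
    + rewrite (rsum_ext n _ (fun i => (C * vnorm X x) * lam i)) by (intros; ring).
      rewrite rsum_scal, H2. lra.
Qed.

Lemma co_convex (X : Banach) (A : (X -> R) -> Prop) : convex X (co X A).
Proof.
  intros f g t [n1 [l1 [a1 [A1 [B1 C1]]]]] [n2 [l2 [a2 [A2 [B2 C2]]]]] Ht.
  exists (n1 + n2)%nat, (fun i => if (i <? n1)%nat then t * l1 i else (1 - t) * l2 (i - n1)%nat),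
    (fun i => if (i <? n1)%nat then a1 i else a2 (i - n1)%nat).
  split; [|split].
  - intros i Hi. destruct (Nat.ltb_spec i n1).
    + destruct (A1 i H); split; auto. nra.
    + destruct (A2 (i - n1)%nat) as [L Ai]. lia. split; auto. nra.
  - rewrite rsum_app. rewrite (rsum_ext n1 _ (fun i => t * l1 i)).
    rewrite (rsum_ext n2 _ (fun i => (1 - t) * l2 i)). rewrite !rsum_scal, B1, B2. ring.
    + intros i Hi. destruct (Nat.ltb_spec (n1 + i) n1). lia. f_equal. f_equal. lia.
    + intros i Hi. destruct (Nat.ltb_spec i n1). auto. lia.
  - intro x. rewrite C1, C2, rsum_app. symmetry.
    rewrite (rsum_ext n1 _ (fun i => t * (l1 i * a1 i x))).
    rewrite (rsum_ext n2 _ (fun i => (1 - t) * (l2 i * a2 i x))). rewrite !rsum_scal. ring.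
    + intros i Hi. destruct (Nat.ltb_spec (n1 + i) n1). lia. replace (n1 + i - n1)%nat with i by lia. ring.
    + intros i Hi. destruct (Nat.ltb_spec i n1). ring. lia.
Qed.

Fixpoint vsum (X : Banach) (n : nat) (u : nat -> X) : X :=
  match n with O => vzero X | S k => vadd X (vsum X k u) (u k) end.

Lemma dual_vsum (X : Banach) g n (lam : nat -> R) u : is_dual X g ->
  g (vsum X n (fun i => vscal X (lam i) (u i))) = rsum n (fun i => lam i * g (u i)).
Proof.
  intro D. induction n; simpl. apply dual_0; auto.
  rewrite dual_add, dual_scal, IHn by auto. ring.
Qed.

Lemma range_dom (X : Banach) T (hT : operator X T) (hmon : monotone X T) g :
  range X T g -> pi2_dom_fitz X T g.
Proof.
  intros [x Hx]. exists x. split. eapply hT; eauto.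
  exists (g x). intros z h Hz. specialize (hmon z h x g Hz Hx).
  lra.
Qed.

Lemma co_dom (X : Banach) T (hT : operator X T) (hmon : monotone X T) C
  (hC : forall g, range X T g -> is_dual X g /\ dnorm X g <= C) f :
  co X (range X T) f -> pi2_dom_fitz X T f.
Proof.
  intro Hco. assert (Df := co_dual X _ C hC f Hco).
  destruct Hco as [n [lam [a [H1 [H2 H3]]]]].
  set (xs := fun i => epsilon (inhabits (vzero X)) (fun x => (i < n)%nat -> T x (a i))).
  assert (Hxs : forall i, (i < n)%nat -> T (xs i) (a i)).
  { intros i Hi. unfold xs. refine (epsilon_spec (inhabits (vzero X)) (fun x => (i < n)%nat -> T x (a i)) _ Hi).
    destruct (H1 i Hi) as [_ [x Hx]]. exists x; auto. }
  exists (vsum X n (fun i => vscal X (lam i) (xs i))). split; auto.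
  exists (rsum n (fun i => lam i * a i (xs i))). intros z g Hz.
  assert (Dg : is_dual X g) by (eapply hT; eauto).
  rewrite !dual_sub by auto. rewrite (dual_vsum X g) by auto.
  replace (f z - f (vsum X n (fun i => vscal X (lam i) (xs i))) -
     (g z - rsum n (fun i => lam i * g (xs i))) + f (vsum X n (fun i => vscal X (lam i) (xs i))))
   with (f z - g z * rsum n lam + rsum n (fun i => lam i * g (xs i))) by (rewrite H2; ring).
  rewrite (H3 z).
  assert (E : rsum n (fun i => lam i * a i z + ((- g z) * lam i + lam i * g (xs i))) =
     rsum n (fun i => lam i * a i z) + (- g z) * rsum n lam + rsum n (fun i => lam i * g (xs i))).
  { rewrite !rsum_add, rsum_scal. ring. }
  replace (rsum n (fun i => lam i * a i z) - g z * rsum n lam + rsum n (fun i => lam i * g (xs i)))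
    with (rsum n (fun i => lam i * a i z + ((- g z) * lam i + lam i * g (xs i)))) by (rewrite E; ring).
  apply rsum_le. intros i Hi. destruct (H1 i Hi) as [L Ai].
  assert (Da : is_dual X (a i)) by (eapply hT; eauto).
  specialize (hmon z g (xs i) (a i) Hz (Hxs i Hi)).
  rewrite !dual_sub in hmon by auto. nra.
Qed.

Lemma dnorm_sub_le (X : Banach) f g : is_dual X f -> is_dual X g ->
  dnorm X (dsub X f g) <= dnorm X f + dnorm X g.
Proof.
  intros Hf Hg. apply dnorm_le. apply dual_dsub; auto.
  pose proof (dnorm_nonneg X f Hf). pose proof (dnorm_nonneg X g Hg). lra.
  intro x. unfold dsub. pose proof (dnorm_bound X f x Hf). pose proof (dnorm_bound X g x Hg).
  unfold Rminus. eapply Rle_trans. apply Rabs_triang. rewrite Rabs_Ropp. lra.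
Qed.

Lemma ratio_big (X : Banach) f g C M z : is_dual X f -> is_dual X g -> dnorm X g <= C ->
  f z - g z > Rabs M * (dnorm X f + Rabs C + 1) ->
  (f z - g z) / dnorm X (dsub X f g) > M.
Proof.
  intros Hf Hg HC H.
  assert (Dd := dual_dsub X f g Hf Hg).
  pose proof (dnorm_nonneg X f Hf). pose proof (dnorm_nonneg X g Hg).
  pose proof (dnorm_nonneg X _ Dd). pose proof (dnorm_sub_le X f g Hf Hg).
  pose proof (Rabs_pos M). pose proof (RRle_abs C). pose proof (RRle_abs M).
  set (dn := dnorm X (dsub X f g)) in *.
  destruct (Req_dec dn 0) as [E|E].
  - assert (Z := dnorm_zero X _ z Dd). fold dn in Z.
    assert (Z2 : dsub X f g z = 0) by (apply Z; lra). unfold dsub in Z2. nra.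
  - assert (Hp : 0 < dn) by lra.
    apply Rmult_lt_reg_r with dn; auto. unfold Rdiv. rewrite Rmult_assoc, Rinv_l by lra.
    nra.
Qed.

Lemma ratio_small (X : Banach) f g C M z : is_dual X f -> is_dual X g -> dnorm X g <= C ->
  (f z - g z) / dnorm X (dsub X f g) <= M ->
  f z - g z <= Rabs M * (dnorm X f + Rabs C + 1).
Proof.
  intros Hf Hg HC H. destruct (Rle_dec (f z - g z) (Rabs M * (dnorm X f + Rabs C + 1))); auto.
  pose proof (ratio_big X f g C M z Hf Hg HC ltac:(lra)). lra.
Qed.

Lemma not_dom_sup (X : Banach) T (hT : operator X T) C
  (hC : forall g, range X T g -> dnorm X g <= C) f :
  is_dual X f -> ~ pi2_dom_fitz X T f -> sup_ratio_infinite X T f.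
Proof.
  intros Hf Hnd M. apply NNPP. intro Hn. apply Hnd. exists (vzero X). split; auto.
  exists (Rabs M * (dnorm X f + Rabs C + 1)). intros z g Hz.
  assert (Hg : is_dual X g) by (eapply hT; eauto).
  rewrite !dual_sub, !dual_0 by auto.
  destruct (Rle_dec (f z - g z) (Rabs M * (dnorm X f + Rabs C + 1))) as [h|h]. lra.
  exfalso. apply Hn. exists z, g. split; auto. apply (ratio_big X f g C M z Hf Hg (hC g (ex_intro _ z Hz))). lra.
Qed.

Lemma not_ncl_eps (X : Banach) A f : is_dual X f -> ~ ncl X A f ->
  exists eps, eps > 0 /\ forall g, A g -> dnorm X (dsub X f g) >= eps.
Proof.
  intros Hf Hn. apply NNPP. intro H. apply Hn. split; auto. intros eps He.
  apply NNPP. intro H2. apply H. exists eps. split; auto. intros g Ag.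
  apply Rnot_lt_ge. intro Hl. apply H2. eauto.
Qed.

Lemma not_wcl_eps (X : Banach) A f : is_dual X f -> ~ wcl X A f ->
  exists l eps, eps > 0 /\ forall g, A g -> ~ Forall (fun x => Rabs (f x - g x) < eps) l.
Proof.
  intros Hf Hn. apply NNPP. intro H. apply Hn. split; auto. intros l eps He.
  apply NNPP. intro H2. apply H. exists l, eps. split; auto. intros g Ag F. apply H2. eauto.
Qed.

Lemma i_ii (X : Banach) T (hT : operator X T) C
  (hC : forall g, range X T g -> dnorm X g <= C) : cond_i X T -> cond_ii X T.
Proof.
  intros Hi f [x [Hf [M HM]]]. apply NNPP. intro Hn.
  destruct (not_ncl_eps X _ f Hf Hn) as [eps [He Heps]].
  set (N := M + Rabs C * vnorm X x).
  destruct (Hi f Hf Hn (Rabs N / eps)) as [z [g [Hz Hr]]].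
  assert (Hg : is_dual X g) by (eapply hT; eauto).
  assert (Rg : range X T g) by (exists z; auto).
  specialize (HM z g Hz). rewrite !dual_sub in HM by auto.
  pose proof (dnorm_bound X g x Hg). pose proof (hC g Rg). pose proof (vnorm_nonneg X x).
  pose proof (RRle_abs C). pose proof (dnorm_nonneg X g Hg).
  assert (dnorm X g * vnorm X x <= Rabs C * vnorm X x) by (apply Rmult_le_compat_r; lra).
  assert (Hgx : Rabs (g x) <= Rabs C * vnorm X x) by lra.
  pose proof (Rabs_Ropp (g x)). pose proof (RRle_abs (- g x)). pose proof (Rabs_pos N). pose proof (RRle_abs N).
  assert (B : f z - g z <= Rabs N) by (unfold N in *; lra).
  specialize (Heps g Rg). set (dn := dnorm X (dsub X f g)) in *.
  assert (dn > 0) by lra.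
  assert (Hr2 : f z - g z > Rabs N / eps * dn).
  { apply Rmult_gt_compat_r with (r := dn) in Hr; auto. unfold Rdiv in Hr.
    rewrite Rmult_assoc, Rinv_l, Rmult_1_r in Hr by lra. unfold Rdiv. lra. }
  assert (Rabs N / eps * dn >= Rabs N).
  { unfold Rdiv. replace (Rabs N) with (Rabs N * / eps * eps) at 2 by (field; lra).
    assert (0 <= Rabs N * / eps) by (apply Rmult_le_pos; auto; apply Rlt_le, Rinv_0_lt_compat; lra).
    nra. }
  lra.
Qed.

Lemma ii_i (X : Banach) T (hT : operator X T) C
  (hC : forall g, range X T g -> dnorm X g <= C) : cond_ii X T -> cond_i X T.
Proof.
  intros Hii f Hf Hn. apply (not_dom_sup X T hT C hC f Hf). intro Hd. apply Hn. apply Hii. auto.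
Qed.

Lemma ncl_convex (X : Banach) A : duals X A ->
  (forall f g t, A f -> A g -> 0 <= t <= 1 -> A (fun x => t * f x + (1 - t) * g x)) ->
  convex X (ncl X A).
Proof.
  intros HA Hc f g t [Hf Nf] [Hg Ng] Ht. split. apply dual_lin; auto.
  intros eps He. destruct (Nf eps He) as [f' [Af Df]]. destruct (Ng eps He) as [g' [Ag Dg]].
  exists (fun x => t * f' x + (1 - t) * g' x). split. apply Hc; auto.
  assert (Hf' := HA _ Af). assert (Hg' := HA _ Ag).
  assert (D1 := dual_dsub X f f' Hf Hf'). assert (D2 := dual_dsub X g g' Hg Hg').
  pose proof (dnorm_nonneg X _ D1). pose proof (dnorm_nonneg X _ D2).
  apply Rle_lt_trans with (t * dnorm X (dsub X f f') + (1 - t) * dnorm X (dsub X g g')).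
  - apply dnorm_le. apply dual_dsub. apply dual_lin; auto. apply dual_lin; auto. nra.
    intro x. unfold dsub. pose proof (dnorm_bound X _ x D1). pose proof (dnorm_bound X _ x D2).
    unfold dsub in *.
    replace (t * f x + (1 - t) * g x - (t * f' x + (1 - t) * g' x))
      with (t * (f x - f' x) + (1 - t) * (g x - g' x)) by ring.
    eapply Rle_trans. apply Rabs_triang. rewrite !Rabs_mult, (Rabs_right t), (Rabs_right (1 - t)) by lra.
    pose proof (vnorm_nonneg X x).
    assert (t * Rabs (f x - f' x) <= t * (dnorm X (fun y => f y - f' y) * vnorm X x)) by (apply Rmult_le_compat_l; lra).
    assert ((1 - t) * Rabs (g x - g' x) <= (1 - t) * (dnorm X (fun y => g y - g' y) * vnorm X x)) by (apply Rmult_le_compat_l; lra).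
    lra.
  - destruct (Rlt_or_le 0 t).
    + assert (t * dnorm X (dsub X f f') < t * eps) by (apply Rmult_lt_compat_l; lra).
      assert ((1 - t) * dnorm X (dsub X g g') <= (1 - t) * eps) by (apply Rmult_le_compat_l; lra).
      lra.
    + assert (t = 0) by lra. subst t. lra.
Qed.

Lemma wcl_convex (X : Banach) A :
  (forall f g t, A f -> A g -> 0 <= t <= 1 -> wcl X A (fun x => t * f x + (1 - t) * g x)) ->
  convex X (wcl X A).
Proof.
  intros Hc f g t [Hf Nf] [Hg Ng] Ht. split. apply dual_lin; auto.
  intros l eps He. destruct (Nf l (eps/2)) as [f' [Af Df]]. lra.
  destruct (Ng l (eps/2)) as [g' [Ag Dg]]. lra.
  destruct (Hc f' g' t Af Ag Ht) as [_ Hw]. destruct (Hw l (eps/2)) as [h [Ah Dh]]. lra.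
  exists h. split; auto. rewrite Forall_forall in *. intros x Hx.
  specialize (Df x Hx). specialize (Dg x Hx). specialize (Dh x Hx).
  replace (t * f x + (1 - t) * g x - h x)
    with (t * (f x - f' x) + (1 - t) * (g x - g' x) + (t * f' x + (1 - t) * g' x - h x)) by ring.
  eapply Rle_lt_trans. apply Rabs_triang.
  assert (Rabs (t * (f x - f' x) + (1 - t) * (g x - g' x)) <= eps / 2).
  { eapply Rle_trans. apply Rabs_triang. rewrite !Rabs_mult, (Rabs_right t), (Rabs_right (1 - t)) by lra.
    nra. }
  lra.
Qed.

Definition lsum (X : Banach) (l : list X) (F : X -> R) : R :=
  fold_right (fun x acc => F x + acc) 0 l.
Definition wv (X : Banach) (l : list X) (a : X -> R) : X :=
  fold_right (fun x acc => vadd X (vscal X (a x) x) acc) (vzero X) l.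

Lemma dual_wv (X : Banach) k l a : is_dual X k -> k (wv X l a) = lsum X l (fun x => a x * k x).
Proof. intro D. induction l; simpl. apply dual_0; auto. rewrite dual_add, dual_scal, IHl by auto. reflexivity. Qed.

Lemma lsum_lin (X : Banach) l F G H c d :
  lsum X l (fun x => F x + c * G x + d * H x) = lsum X l F + c * lsum X l G + d * lsum X l H.
Proof. induction l; simpl. ring. rewrite IHl. ring. Qed.

Lemma lsum_ext (X : Banach) l F G : (forall x, F x = G x) -> lsum X l F = lsum X l G.
Proof. intro H. induction l; simpl; auto. rewrite IHl, H; auto. Qed.

Lemma lsum_le (X : Banach) l F G : (forall x, In x l -> F x <= G x) -> lsum X l F <= lsum X l G.
Proof. induction l; simpl; intros H. lra. assert (F a <= G a) by auto.
  assert (lsum X l F <= lsum X l G) by auto. lra. Qed.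

Lemma lsum_nonneg (X : Banach) l F : (forall x, 0 <= F x) -> 0 <= lsum X l F.
Proof. intro H. induction l; simpl. lra. specialize (H a). lra. Qed.

Lemma lsum_in (X : Banach) l F x : (forall x, 0 <= F x) -> In x l -> F x <= lsum X l F.
Proof. intros H. induction l; simpl. tauto.
  pose proof (lsum_nonneg X l F H). pose proof (H a). pose proof (H x).
  intros [->|Hi]. lra. specialize (IHl Hi). lra. Qed.

Lemma sq_lt (a e : R) : 0 < e -> a * a < e * e -> Rabs a < e.
Proof.
  intros He H. destruct (Rlt_or_le (Rabs a) e); auto.
  assert (Rabs a * Rabs a = a * a) by (rewrite <- Rabs_mult; apply Rabs_right; nra).
  nra.
Qed.

Lemma sep (X : Banach) T (hT : operator X T) C
  (hC : forall g, range X T g -> dnorm X g <= C) f :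
  is_dual X f -> ~ wcl X (range X T) f -> convex X (wcl X (range X T)) ->
  (exists g, range X T g) ->
  exists w del, del > 0 /\ forall h, range X T h -> f w - h w >= del.
Proof.
  intros Hf Hn Hcv [g1 Hg1].
  assert (HR : forall h, range X T h -> is_dual X h) by (intros h [z Hz]; eapply hT; eauto).
  destruct (not_wcl_eps X _ f Hf Hn) as [l [eps [He Heps]]].
  set (D := fun g : X -> R => lsum X l (fun x => (f x - g x) * (f x - g x))).
  assert (D0 : forall g, 0 <= D g). { intro g; apply lsum_nonneg; intro; cbv beta. apply Rle_0_sqr. }
  assert (LB : forall g, wcl X (range X T) g -> D g >= eps / 2 * (eps / 2)).
  { intros g [Hg Wg]. apply Rnot_lt_ge. intro Hl.
    destruct (Wg l (eps / 2)) as [h [Rh Fh]]. lra.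
    apply (Heps h Rh). rewrite Forall_forall in *. intros x Hx. specialize (Fh x Hx).
    assert (Rabs (f x - g x) < eps / 2).
    { apply sq_lt. lra. eapply Rle_lt_trans; [|exact Hl].
      apply (lsum_in X l (fun x => (f x - g x) * (f x - g x))); auto. intro; apply Rle_0_sqr. }
    replace (f x - h x) with ((f x - g x) + (g x - h x)) by ring.
    eapply Rle_lt_trans. apply Rabs_triang. lra. }
  set (E := fun r => exists g, wcl X (range X T) g /\ r = - D g).
  destruct (completeness E) as [m [Hm1 Hm2]].
  { exists 0. intros r [g [_ ->]]. specialize (D0 g). lra. }
  { exists (- D g1). exists g1. split; auto. apply self_wcl; auto. }
  set (d := - m).
  assert (Hd : d >= eps / 2 * (eps / 2)).
  { assert (m <= - (eps / 2 * (eps / 2))). apply Hm2. intros r [g [Wg ->]]. specialize (LB g Wg). lra.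
    unfold d; lra. }
  assert (Hdpos : d > 0) by nra.
  assert (Dge : forall g, wcl X (range X T) g -> D g >= d).
  { intros g Wg. assert (- D g <= m) by (apply Hm1; exists g; auto). unfold d; lra. }
  assert (Near : forall eta, eta > 0 -> exists g, wcl X (range X T) g /\ D g <= d + eta).
  { intros eta Heta. apply NNPP. intro Hno.
    assert (m <= m - eta). apply Hm2. intros r [g [Wg ->]].
    destruct (Rle_dec (D g) (d + eta)) as [h|h]. exfalso; apply Hno; eauto. unfold d in h; lra. lra. }
  set (B := lsum X l (fun x => (2 * Rabs C * vnorm X x + 1) * (2 * Rabs C * vnorm X x + 1))).
  assert (HB : 0 <= B) by (apply lsum_nonneg; intro x; cbv beta; apply Rle_0_sqr).
  set (s := Rmin 1 (d / (2 * (B + 1)))).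
  assert (Hs1 : s <= 1) by apply Rmin_l.
  assert (Hs2 : s <= d / (2 * (B + 1))) by apply Rmin_r.
  assert (Hs0 : 0 < s). { unfold s. apply Rmin_glb_lt. lra. apply Rdiv_lt_0_compat; lra. }
  assert (HsB : s * (B + 1) <= d / 2).
  { apply Rmult_le_compat_r with (r := B + 1) in Hs2; [|lra].
    unfold Rdiv in Hs2. rewrite Rmult_assoc, Rinv_mult, (Rmult_assoc (/ 2)), Rinv_l, Rmult_1_r in Hs2 by lra.
    lra. }
  destruct (Near (s * d / 2)) as [g0 [Wg0 Hg0]]. nra.
  assert (Dg0 : is_dual X g0) by (destruct Wg0; auto).
  exists (wv X l (fun x => f x - g0 x)), (d / 2). split. lra.
  intros h Rh. assert (Dh := HR h Rh).
  rewrite (dual_wv X f), (dual_wv X h) by auto.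
  set (P := lsum X l (fun x => (f x - g0 x) * (h x - g0 x))).
  set (Q := lsum X l (fun x => (h x - g0 x) * (h x - g0 x))).
  assert (EQ : lsum X l (fun x => (f x - g0 x) * f x) - lsum X l (fun x => (f x - g0 x) * h x) = D g0 - P).
  { unfold D, P.
    pose proof (lsum_lin X l (fun x => (f x - g0 x) * f x) (fun x => (f x - g0 x) * h x) (fun _ => 0) (-1) 0) as E1.
    pose proof (lsum_lin X l (fun x => (f x - g0 x) * (f x - g0 x)) (fun x => (f x - g0 x) * (h x - g0 x)) (fun _ => 0) (-1) 0) as E2.
    assert (E3 : lsum X l (fun x => (f x - g0 x) * f x + -1 * ((f x - g0 x) * h x) + 0 * 0) =
       lsum X l (fun x => (f x - g0 x) * (f x - g0 x) + -1 * ((f x - g0 x) * (h x - g0 x)) + 0 * 0))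
      by (apply lsum_ext; intro; ring).
    lra. }
  rewrite EQ.
  assert (Wgs : wcl X (range X T) (fun x => s * h x + (1 - s) * g0 x)).
  { apply Hcv; auto. apply self_wcl; auto. lra. }
  assert (Hgs := Dge _ Wgs).
  assert (EQ2 : D (fun x => s * h x + (1 - s) * g0 x) = D g0 + (-2 * s) * P + (s * s) * Q).
  { unfold D, P, Q. rewrite <- lsum_lin. apply lsum_ext. intro; ring. }
  assert (HQ : Q <= B).
  { apply lsum_le. intros x Hx.
    destruct Wg0 as [_ W0]. destruct (W0 (x :: nil) 1) as [h' [Rh' F']]. lra.
    inversion F' as [|? ? F1 _]. subst.
    pose proof (dnorm_bound X h x Dh). pose proof (dnorm_bound X h' x (HR h' Rh')).
    pose proof (hC h Rh). pose proof (hC h' Rh'). pose proof (vnorm_nonneg X x).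
    pose proof (RRle_abs C).
    assert (dnorm X h * vnorm X x <= Rabs C * vnorm X x) by (apply Rmult_le_compat_r; lra).
    assert (dnorm X h' * vnorm X x <= Rabs C * vnorm X x) by (apply Rmult_le_compat_r; lra).
    assert (A1 : Rabs (h x - g0 x) <= 2 * Rabs C * vnorm X x + 1).
    { replace (h x - g0 x) with (h x + (h' x - g0 x) - h' x) by ring.
      unfold Rminus at 1. eapply Rle_trans. apply Rabs_triang. rewrite Rabs_Ropp.
      pose proof (Rabs_triang (h x) (h' x - g0 x)). rewrite Rabs_minus_sym in F1. lra. }
    pose proof (Rabs_pos (h x - g0 x)).
    assert (EA : Rabs (h x - g0 x) * Rabs (h x - g0 x) = (h x - g0 x) * (h x - g0 x))
      by (rewrite <- Rabs_mult; apply Rabs_right; apply Rle_ge, Rle_0_sqr).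
    cbv beta. rewrite <- EA. apply Rmult_le_compat; lra. }
  assert (HQ0 : 0 <= Q) by (apply lsum_nonneg; intro; cbv beta; apply Rle_0_sqr).
  assert (H00 : s * s * Q <= s * s * B) by (apply Rmult_le_compat_l; [apply Rle_0_sqr | exact HQ]).
  assert (Hm : s * (2 * P) <= s * (d / 2 + s * B)).
  { assert (Hsd : s * d / 2 = s * (d / 2)) by field. lra. }
  apply Rmult_le_reg_l in Hm; [|lra].
  assert (s * B <= s * (B + 1)) by (apply Rmult_le_compat_l; lra).
  pose proof (Dge g0 Wg0). lra.
Qed.

Lemma max_part (X : Banach) T (hT : operator X T) C
  (hC : forall g, range X T g -> dnorm X g <= C) :
  maximal_monotone X T -> cond_iv' X T -> cond_i' X T.
Proof.
  intros [hmon hmax] Hiv f Hf Hn. apply NNPP. intro Hs.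
  apply not_all_ex_not in Hs. destruct Hs as [M HM].
  assert (HR : forall h, range X T h -> is_dual X h) by (intros h [z Hz]; eapply hT; eauto).
  set (N := Rabs M * (dnorm X f + Rabs C + 1)).
  assert (HN : forall z g, T z g -> f z - g z <= N).
  { intros z g Hz. assert (Rg : range X T g) by (exists z; auto).
    apply (ratio_small X f g C M z Hf (HR g Rg) (hC g Rg)).
    apply Rnot_gt_le. intro Hgt. apply HM. exists z, g. auto. }
  assert (Hw : exists w del, del > 0 /\ forall h, range X T h -> f w - h w >= del).
  { destruct (classic (exists g, range X T g)) as [Hne|Hne].
    - apply (sep X T hT C hC f Hf Hn Hiv Hne).
    - exists (vzero X), 1. split. lra. intros h Rh. exfalso. eauto. }
  destruct Hw as [w [del [Hdel Hw]]].
  set (t := Rabs N / del).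
  assert (Htd : t * del = Rabs N) by (unfold t; field; lra).
  pose proof (RRle_abs N) as HNabs.
  set (S := fun x k => T x k \/ (x = vscal X t w /\ k = f)).
  assert (Key : forall z g, T z g -> 0 <= f (vsub X (vscal X t w) z) - g (vsub X (vscal X t w) z)).
  { intros z g Hz. assert (Rg : range X T g) by (exists z; auto).
    assert (Dg := HR g Rg). rewrite !dual_sub, !dual_scal by auto.
    specialize (Hw g Rg). specialize (HN z g Hz).
    assert (t * (f w - g w) >= t * del).
    { apply Rle_ge, Rmult_le_compat_l. unfold t. apply Rmult_le_pos. apply Rabs_pos.
      apply Rlt_le, Rinv_0_lt_compat; lra. lra. }
    lra. }
  assert (TS : T (vscal X t w) f).
  { apply (hmax S).
    - intros x k [H|[_ ->]]. eapply hT; eauto. auto.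
    - intros x k y k' [H1|[-> ->]] [H2|[-> ->]].
      + apply hmon; auto.
      + specialize (Key x k H1). assert (Dk : is_dual X k) by (eapply hT; eauto).
        rewrite !dual_sub in Key by auto. rewrite !dual_sub by auto. lra.
      + apply Key; auto.
      + lra.
    - intros x k H. left. auto.
    - right. auto. }
  apply Hn. apply self_wcl; auto. exists (vscal X t w). auto.
Qed.

Theorem theorem1p6 (X : Banach) (T : X -> (X -> R) -> Prop)
  (hT : operator X T) (hmon : monotone X T) (hbd : bounded_set X (range X T)) :
  ((cond_i X T <-> cond_ii X T) /\ (cond_ii X T <-> cond_iii X T)) /\
  (cond_iii X T -> cond_iv X T) /\ (cond_iv X T -> cond_iv' X T) /\
  (cond_i X T -> cond_i' X T) /\
  (cond_ii X T -> cond_ii' X T) /\ (cond_ii' X T -> cond_iii' X T) /\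
  (cond_iii' X T -> cond_i' X T) /\
  (cond_iii' X T -> cond_iv' X T) /\
  (maximal_monotone X T -> cond_iv' X T -> cond_i' X T).
Proof.
  destruct hbd as [C hC].
  assert (HR : duals X (range X T)) by (intros h [z Hz]; eapply hT; eauto).
  assert (hC2 : forall g, range X T g -> is_dual X g /\ dnorm X g <= C) by (intros; split; auto).
  assert (Hcod : duals X (co X (range X T))) by (apply (co_dual X _ C hC2)).
  assert (CD : forall f, co X (range X T) f -> pi2_dom_fitz X T f) by (apply (co_dom X T hT hmon C hC2)).
  assert (RC : forall f, range X T f -> co X (range X T) f) by (intros; apply range_co; auto).
  assert (PD : duals X (pi2_dom_fitz X T)) by (intros f [x [H _]]; auto).
  split; [split; [split|split]|].
  - apply (i_ii X T hT C hC).
  - apply (ii_i X T hT C hC).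
  - intro Hii. split; intro f; split; intro H.
    + eapply ncl_mono; eauto.
    + apply ncl_idem; auto. eapply ncl_mono; [|exact H]. intros g Hg. apply Hii. auto.
    + eapply ncl_mono; eauto.
    + eapply ncl_mono; [exact RC|]. apply ncl_idem; auto. eapply ncl_mono; [|exact H]. exact Hii.
  - intros [E1 E2] f Hf. apply E1. apply E2. apply self_ncl; auto.
  - split; [|split; [|split; [|split; [|split; [|split; [|split]]]]]].
    + intros [E1 _] f g t Hf Hg Ht. apply E1. apply E1 in Hf. apply E1 in Hg.
      apply (ncl_convex X _ Hcod (co_convex X _)); auto.
    + intro Hiv. apply wcl_convex. intros f g t Hf Hg Ht. apply ncl_wcl; auto.
      apply Hiv; auto; apply self_ncl; auto.
    + intros Hi f Hf Hn. apply Hi; auto. intro H. apply Hn. apply ncl_wcl; auto.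
    + intros Hii f Hf. apply ncl_wcl; auto.
    + intro Hii. split; intro f; split; intro H.
      * eapply wcl_mono; eauto.
      * apply wcl_idem. eapply wcl_mono; [|exact H]. intros g Hg. apply Hii. auto.
      * eapply wcl_mono; eauto.
      * eapply wcl_mono; [exact RC|]. apply wcl_idem. eapply wcl_mono; [|exact H]. exact Hii.
    + intros [E1 E2] f Hf Hn. apply (not_dom_sup X T hT C hC f Hf). intro Hd. apply Hn.
      apply E1. apply E2. apply self_wcl; auto.
    + intros [E1 _] f g t Hf Hg Ht. apply E1. apply E1 in Hf. apply E1 in Hg.
      revert f g t Hf Hg Ht. apply wcl_convex. intros f g t Hf Hg Ht.
      apply self_wcl. apply (Hcod _ (co_convex X _ f g t Hf Hg Ht)). apply co_convex; auto.
    + apply (max_part X T hT C hC).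
Qed.
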